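(* Let $(\alpha_n)_{n\ge0}\in\mathbb{D}^\infty$ and $k\in\mathbb{Z}_+$. If $G^{(1)},G^{(2)}\in A_{2k}$ have the same image under the quotient map $\psi_{2k}:A_{2k}\to B_{2k}$, then there exists $C<\infty$ (possibly depending on $G^{(1)},G^{(2)}$, but not on $N$) such that for every $N\in\mathbb{Z}_+$, $$\Big|\sum_{n=0}^N[\phi_{2k}(G^{(1)})]_n-\sum_{n=0}^N[\phi_{2k}(G^{(2)})]_n\Big|<C .$$
   Context: $\mathbb{D}$ is the open unit disk. $A_{2k}:=\mathbb{C}[x_1,y_1,\dots,x_k,y_k]$, $B_{2k}:=A_{2k}/(\prod_{i=1}^kx_iy_i-1)$, and $\psi_{2k}$ is the natural quotient homomorphism. $\phi_{2k}$ is the linear map from $A_{2k}$ to complex sequences defined on monomials by $[\phi_{2k}(\prod_{i=1}^k x_i^{\beta_i}y_i^{\gamma_i})]_n=\prod_{i=1}^k\alpha_{n+\beta_i}\overline{\alpha_{n+\gamma_i}}$ for all $\beta_i,\gamma_i\in\mathbb{N}$. *)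

(* Defs.v *)
From HB Require Import structures.
From mathcomp Require Import all_boot all_order all_algebra.
From mathcomp Require Import reals.
From mathcomp.real_closed Require Import complex.
From mathcomp Require Import mpoly.

Set Implicit Arguments.
Unset Strict Implicit.
Unset Printing Implicit Defensive.

Import Order.TTheory GRing.Theory Num.Theory.
Local Open Scope ring_scope.
Local Open Scope complex_scope.

(* A_{2k} = C[x_1,y_1,...,x_k,y_k] is {mpoly R[i][k + k]}, with x_i the
   variable 'X_(lshift k i) and y_i the variable 'X_(rshift k i), i < k. *)

Definition xvar (R : realType) (k : nat) (i : 'I_k) : {mpoly R[i][k + k]} :=
  'X_(lshift k i).
Definition yvar (R : realType) (k : nat) (i : 'I_k) : {mpoly R[i][k + k]} :=
  'X_(rshift k i).

(* the polynomial prod_i x_i y_i - 1 generating the ideal defining B_{2k} *)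
Definition Bgen (R : realType) (k : nat) : {mpoly R[i][k + k]} :=
  \prod_(i < k) (xvar R i * yvar R i) - 1.

(* psi_{2k}(G1) = psi_{2k}(G2) in B_{2k} = A_{2k}/(prod x_i y_i - 1):
   G1 - G2 lies in the principal ideal generated by Bgen. *)
Definition same_image_B (R : realType) (k : nat) (G1 G2 : {mpoly R[i][k + k]}) : Prop :=
  exists H : {mpoly R[i][k + k]}, G1 - G2 = H * Bgen R k.

Definition phi_mono (R : realType) (k : nat) (alpha : nat -> R[i])
  (m : 'X_{1.. k + k}) (n : nat) : R[i] :=
  \prod_(i < k) (alpha (n + m (lshift k i))%N * (alpha (n + m (rshift k i))%N)^*).

Definition phi (R : realType) (k : nat) (alpha : nat -> R[i])
  (G : {mpoly R[i][k + k]}) (n : nat) : R[i] :=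
  \sum_(m <- msupp G) G@_m * phi_mono alpha m n.

Definition in_disk_seq (R : realType) (alpha : nat -> R[i]) : Prop :=
  forall n, `|alpha n| < 1.

(* Main.v *)
Require Import Defs.
From HB Require Import structures.
From mathcomp Require Import all_boot all_order all_algebra.
From mathcomp Require Import reals.
From mathcomp.real_closed Require Import complex.
From mathcomp Require Import mpoly ssrcomplements bigenough.
Import Order.TTheory GRing.Theory Num.Theory BigEnough.
Local Open Scope ring_scope.
Local Open Scope complex_scope.

Lemma phiE (R : realType) (k : nat) (alpha : nat -> R[i]) (p : {mpoly R[i][k + k]}) (n b : nat) :
  (msize p <= b)%N ->
  phi alpha p n = \sum_(m : 'X_{1..(k + k) < b}) p@_m * phi_mono alpha m n.
Proof.
move=> le_pi; set I : subFinType _ := 'X_{1..(k + k) < b}.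
rewrite /phi (big_mksub I) ?msupp_uniq //=; first last.
  by move=> x /msize_mdeg_lt /leq_trans; apply.
rewrite big_rmcond //= => j /memN_msupp_eq0 ->.
by rewrite mul0r.
Qed.

Lemma phiB (R : realType) (k : nat) (alpha : nat -> R[i]) (p q : {mpoly R[i][k + k]}) n :
  phi alpha (p - q) n = phi alpha p n - phi alpha q n.
Proof.
pose_big_enough i.
  rewrite !(@phiE _ _ _ _ _ i) // -sumrB; apply/eq_bigr => m _.
  by rewrite mcoeffB mulrBl.
by close.
Qed.

Lemma phiD (R : realType) (k : nat) (alpha : nat -> R[i]) (p q : {mpoly R[i][k + k]}) n :
  phi alpha (p + q) n = phi alpha p n + phi alpha q n.
Proof.
pose_big_enough i.
  rewrite !(@phiE _ _ _ _ _ i) // -big_split; apply/eq_bigr => m _.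
  by rewrite mcoeffD mulrDl.
by close.
Qed.

Lemma phiZ (R : realType) (k : nat) (alpha : nat -> R[i]) c (p : {mpoly R[i][k + k]}) n :
  phi alpha (c *: p) n = c * phi alpha p n.
Proof.
pose_big_enough i.
  rewrite !(@phiE _ _ _ _ _ i) // mulr_sumr; apply/eq_bigr => m _.
  by rewrite mcoeffZ mulrA.
by close.
Qed.

Lemma phi0 (R : realType) (k : nat) (alpha : nat -> R[i]) n :
  phi alpha (0 : {mpoly R[i][k + k]}) n = 0.
Proof. by rewrite -(subrr 0) phiB subrr. Qed.

Lemma phi_sum (R : realType) (k : nat) (alpha : nat -> R[i]) (T : Type) (s : seq T)
   (F : T -> {mpoly R[i][k + k]}) n :
  phi alpha (\sum_(t <- s) F t) n = \sum_(t <- s) phi alpha (F t) n.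
Proof.
elim: s => [|a s IH]; first by rewrite !big_nil phi0.
by rewrite !big_cons phiD IH.
Qed.

Lemma phiX (R : realType) (k : nat) (alpha : nat -> R[i]) m n :
  phi alpha ('X_[m] : {mpoly R[i][k + k]}) n = phi_mono alpha m n.
Proof. by rewrite /phi msuppX big_seq1 mcoeffX eqxx mul1r. Qed.

Definition Vm (k : nat) : 'X_{1..k + k} :=
  (\sum_(i < k) (U_(lshift k i) + U_(rshift k i)))%MM.

Lemma BgenE (R : realType) (k : nat) : Bgen R k = 'X_[Vm k] - 1.
Proof.
rewrite /Bgen /Vm; congr (_ - _).
elim/big_rec2: _ => [|i y1 y2 _ ->]; first by rewrite mpolyX0.
by rewrite /xvar /yvar !mpolyXD.
Qed.

Lemma VmL k j : Vm k (lshift k j) = 1%N.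
Proof.
rewrite /Vm mnm_sumE (bigD1 j) //= mnmDE !mnm1E eqxx.
have -> : (rshift k j == lshift k j) = false.
  by apply/negbTE; rewrite -val_eqE /= neq_ltn ltn_addr ?orbT.
rewrite big1 // => i /negbTE ij; rewrite mnmDE !mnm1E.
have -> : (rshift k i == lshift k j) = false.
  by apply/negbTE; rewrite -val_eqE /= neq_ltn ltn_addr ?orbT.
by rewrite (inj_eq (@lshift_inj _ _)) ij.
Qed.

Lemma VmR k j : Vm k (rshift k j) = 1%N.
Proof.
rewrite /Vm mnm_sumE (bigD1 j) //= mnmDE !mnm1E eqxx.
have -> : (lshift k j == rshift k j) = false.
  by apply/negbTE; rewrite -val_eqE /= neq_ltn ltn_addr ?orbT.
rewrite big1 // => i /negbTE ij; rewrite mnmDE !mnm1E.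
have -> : (lshift k i == rshift k j) = false.
  by apply/negbTE; rewrite -val_eqE /= neq_ltn ltn_addr ?orbT.
by rewrite (inj_eq (@rshift_inj _ _)) ij.
Qed.

Lemma phi_monoV (R : realType) (k : nat) (alpha : nat -> R[i]) (m : 'X_{1..k + k}) n :
  phi_mono alpha (m + Vm k)%MM n = phi_mono alpha m n.+1.
Proof.
rewrite /phi_mono; apply/eq_bigr => i _.
by rewrite !mnmDE VmL VmR !addn1 !addnS !addSn.
Qed.

Lemma normc_conj (R : realType) (x : R[i]) : `|x^*| = `|x|.
Proof. by case: x => a b; rewrite !normc_def /= sqrrN. Qed.

Lemma phi_mono_le1 (R : realType) (k : nat) (alpha : nat -> R[i]) (m : 'X_{1..k + k}) n :
  in_disk_seq alpha -> `|phi_mono alpha m n| <= 1.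
Proof.
move=> hd; rewrite /phi_mono normr_prod prodr_ile1 // => i _.
rewrite normr_ge0 /= normrM normc_conj mulr_ile1 ?normr_ge0 //; exact: ltW.
Qed.

Theorem lemma2 (R : realType) (alpha : nat -> R[i]) (k : nat)
  (G1 G2 : {mpoly R[i][k + k]}) :
  in_disk_seq alpha -> (0 < k)%N -> same_image_B G1 G2 ->
  exists C : R, forall N : nat, (0 < N)%N ->
    `| \sum_(n < N.+1) phi alpha G1 n - \sum_(n < N.+1) phi alpha G2 n | < C%:C.
Proof.
move=> hd _ [H eqH].
pose f (m : 'X_{1..k + k}) n := phi_mono alpha m n.
have key n : phi alpha G1 n - phi alpha G2 n =
    \sum_(m <- msupp H) H@_m * (f m n.+1 - f m n).
  rewrite -phiB eqH {1}(mpolyE H) mulr_suml phi_sum; apply/eq_bigr => m _.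
  by rewrite -scalerAl phiZ BgenE mulrBr mulr1 -mpolyXD phiB !phiX phi_monoV.
pose S : R[i] := \sum_(m <- msupp H) `|H@_m| * 2.
have S0 : 0 <= S by apply: sumr_ge0 => m _; rewrite mulr_ge0 ?normr_ge0.
have SE : S = (complex.Re S)%:C.
  by rewrite {1}(complexE S) (ger0_Im S0) mulr0 addr0.
exists (complex.Re S + 1) => N _.
apply: (le_lt_trans (y := S)); last by rewrite {1}SE ltcR ltrDl ltr01.
rewrite -sumrB; under eq_bigr => n _ do rewrite key; rewrite exchange_big /=.
apply: (le_trans (ler_norm_sum _ _ _)); apply: ler_sum => m _.
rewrite -mulr_sumr -(big_mkord xpredT (fun n => f m n.+1 - f m n)) telescope_sumr //.
rewrite normrM ler_wpM2l ?normr_ge0 //.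
apply: (le_trans (ler_normB _ _)).
by rewrite mulr2n lerD ?phi_mono_le1.
Qed.
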